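(* Let $\mathbb E$ be a weakly congruence distributive category. Then (1) for every object $X$, every internal group in the fiber $Pt_X\mathbb E$ is trivial, i.e. its underlying split epimorphism $f:A\to X$ is an isomorphism; (2) every object of $\mathbb E$ carrying an internal associative Mal'tsev structure is a subobject of the terminal object (its map to $1$ is a monomorphism).
   Context: A finitely complete category $\mathbb E$ is weakly congruence distributive if for any equivalence relations $R,S,T$ on an object $X$ such that the supremum $R\vee S$ exists among equivalence relations on $X$, the conditions $T\wedge R=\Delta_X$ and $T\wedge S=\Delta_X$ imply $T\wedge(R\vee S)=\Delta_X$, where $\Delta_X$ is the discrete relation. $Pt_X\mathbb E$ is the category of triples $(A,f,s)$, $f:A\to X$, $s:X\to A$, $fs=1_X$, with morphisms commuting with $f$ and $s$; it is finitely complete (products are pullbacks over $X$), with terminal object $(X,1_X,1_X)$. An associative Mal'tsev structure on $X$ is $p:X^3\to X$ with $p(x,y,y)=x=p(y,y,x)$ and $p(x,y,p(z,u,v))=p(p(x,y,z),u,v)$. *)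

(* Defs.v *)
Set Implicit Arguments.
Unset Strict Implicit.

Record Category := {
  Ob :> Type;
  Hom : Ob -> Ob -> Type;
  idm : forall X, Hom X X;
  comp : forall X Y Z, Hom Y Z -> Hom X Y -> Hom X Z;
  comp_idl : forall X Y (f : Hom X Y), comp (idm Y) f = f;
  comp_idr : forall X Y (f : Hom X Y), comp f (idm X) = f;
  comp_assoc : forall X Y Z W (h : Hom Z W) (g : Hom Y Z) (f : Hom X Y),
      comp h (comp g f) = comp (comp h g) f
}.
Arguments Hom {c} X Y.
Arguments idm {c} X.
Arguments comp {c X Y Z} g f.

Record FinCompleteCategory := {
  fc_cat :> Category;
  term : fc_cat;
  to_term : forall X : fc_cat, Hom X term;
  to_term_uniq : forall X (u v : Hom X term), u = v;
  pb : forall X Y Z : fc_cat, Hom X Z -> Hom Y Z -> fc_cat;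
  pb1 : forall X Y Z (f : Hom X Z) (g : Hom Y Z), Hom (pb f g) X;
  pb2 : forall X Y Z (f : Hom X Z) (g : Hom Y Z), Hom (pb f g) Y;
  pb_comm : forall X Y Z (f : Hom X Z) (g : Hom Y Z),
      comp f (pb1 f g) = comp g (pb2 f g);
  pb_pair : forall X Y Z (f : Hom X Z) (g : Hom Y Z) W (a : Hom W X) (b : Hom W Y),
      comp f a = comp g b -> Hom W (pb f g);
  pb_pair1 : forall X Y Z (f : Hom X Z) (g : Hom Y Z) W (a : Hom W X) (b : Hom W Y)
      (H : comp f a = comp g b), comp (pb1 f g) (pb_pair H) = a;
  pb_pair2 : forall X Y Z (f : Hom X Z) (g : Hom Y Z) W (a : Hom W X) (b : Hom W Y)
      (H : comp f a = comp g b), comp (pb2 f g) (pb_pair H) = b;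
  pb_uniq : forall X Y Z (f : Hom X Z) (g : Hom Y Z) W (u v : Hom W (pb f g)),
      comp (pb1 f g) u = comp (pb1 f g) v -> comp (pb2 f g) u = comp (pb2 f g) v -> u = v
}.
Arguments term {_}.
Arguments to_term {_} X.
Arguments pb {_ _ _ _} _ _.
Arguments pb1 {_ _ _ _} _ _.
Arguments pb2 {_ _ _ _} _ _.
Arguments pb_pair {_ _ _ _ _ _ _ _ _} _.

Section Defs.
Variable C : FinCompleteCategory.

Definition is_mono (X Y : C) (m : Hom X Y) : Prop :=
  forall Z (a b : Hom Z X), comp m a = comp m b -> a = b.

Definition is_iso (X Y : C) (f : Hom X Y) : Prop :=
  exists g : Hom Y X, comp f g = idm Y /\ comp g f = idm X.

Definition prod (X Y : C) : C := pb (to_term X) (to_term Y).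
Definition prj1 (X Y : C) : Hom (prod X Y) X := pb1 _ _.
Definition prj2 (X Y : C) : Hom (prod X Y) Y := pb2 _ _.
Definition pair (X Y Z : C) (a : Hom Z X) (b : Hom Z Y) : Hom Z (prod X Y) :=
  pb_pair (to_term_uniq (comp (to_term X) a) (comp (to_term Y) b)).

(** * Internal relations on X: spans R -> X, X (jointly monic for relations) *)
Record span (X : C) := { sp_ob : C; sp1 : Hom sp_ob X; sp2 : Hom sp_ob X }.

Definition jointly_monic (X : C) (R : span X) : Prop :=
  forall Z (a b : Hom Z (sp_ob R)),
    comp (sp1 R) a = comp (sp1 R) b -> comp (sp2 R) a = comp (sp2 R) b -> a = b.

Definition in_rel (X : C) (R : span X) (Z : C) (x y : Hom Z X) : Prop :=
  exists d : Hom Z (sp_ob R), comp (sp1 R) d = x /\ comp (sp2 R) d = y.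

Definition is_equivalence_relation (X : C) (R : span X) : Prop :=
  jointly_monic R /\
  (forall Z (x : Hom Z X), in_rel R x x) /\
  (forall Z (x y : Hom Z X), in_rel R x y -> in_rel R y x) /\
  (forall Z (x y z : Hom Z X), in_rel R x y -> in_rel R y z -> in_rel R x z).

Definition rel_le (X : C) (R S : span X) : Prop :=
  exists m : Hom (sp_ob R) (sp_ob S),
    comp (sp1 S) m = sp1 R /\ comp (sp2 S) m = sp2 R.

Definition rel_eq (X : C) (R S : span X) : Prop := rel_le R S /\ rel_le S R.

Definition discrete_rel (X : C) : span X := {| sp_ob := X; sp1 := idm X; sp2 := idm X |}.

Definition rel_meet (X : C) (R S : span X) : span X :=
  let P := pb (pair (sp1 R) (sp2 R)) (pair (sp1 S) (sp2 S)) in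
  {| sp_ob := P;
     sp1 := comp (sp1 R) (pb1 _ _);
     sp2 := comp (sp2 R) (pb1 _ _) |}.

Definition is_equiv_sup (X : C) (R S J : span X) : Prop :=
  is_equivalence_relation J /\ rel_le R J /\ rel_le S J /\
  (forall K : span X, is_equivalence_relation K -> rel_le R K -> rel_le S K ->
     rel_le J K).

Definition weakly_congruence_distributive : Prop :=
  forall (X : C) (R S T J : span X),
    is_equivalence_relation R -> is_equivalence_relation S ->
    is_equivalence_relation T -> is_equiv_sup R S J ->
    rel_eq (rel_meet T R) (discrete_rel X) ->
    rel_eq (rel_meet T S) (discrete_rel X) ->
    rel_eq (rel_meet T J) (discrete_rel X).

(** An object of Pt_X E is (A, f, s) with f s = 1_X. Its square in Pt_X E is the
    pullback P of f along f (with section <s,s>); the terminal object is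
    (X,1,1), so the unit is necessarily s (the only Pt_X-map (X,1,1) -> (A,f,s)).
    The group axioms are stated for generalized elements (equivalent, by the
    universal property of the pullback, to the diagrammatic ones); a map
    u : Z -> P is identified with the pair (pb1 u, pb2 u). *)
Definition is_pt_square_pair (X A : C) (f : Hom A X) (Z : C)
    (u : Hom Z (pb f f)) (x y : Hom Z A) : Prop :=
  comp (pb1 f f) u = x /\ comp (pb2 f f) u = y.

Definition is_internal_group_in_Pt (X A : C) (f : Hom A X) (s : Hom X A)
    (m : Hom (pb f f) A) (i : Hom A A) : Prop :=
  comp f s = idm X /\
  (* m : (A,f,s) x (A,f,s) -> (A,f,s) is a morphism of Pt_X E *)
  comp f m = comp f (pb1 f f) /\
  comp m (@pb_pair C A A X f f X s s eq_refl) = s /\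
  (* i : (A,f,s) -> (A,f,s) is a morphism of Pt_X E *)
  comp f i = f /\ comp i s = s /\
  (forall Z (x y z : Hom Z A) (u v w t : Hom Z (pb f f)),
      is_pt_square_pair u x y -> is_pt_square_pair v (comp m u) z ->
      is_pt_square_pair w y z -> is_pt_square_pair t x (comp m w) ->
      comp m v = comp m t) /\
  (forall Z (x : Hom Z A) (u : Hom Z (pb f f)),
      is_pt_square_pair u x (comp s (comp f x)) -> comp m u = x) /\
  (forall Z (x : Hom Z A) (u : Hom Z (pb f f)),
      is_pt_square_pair u (comp s (comp f x)) x -> comp m u = x) /\
  (forall Z (x : Hom Z A) (u : Hom Z (pb f f)),
      is_pt_square_pair u x (comp i x) -> comp m u = comp s (comp f x)) /\
  (forall Z (x : Hom Z A) (u : Hom Z (pb f f)),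
      is_pt_square_pair u (comp i x) x -> comp m u = comp s (comp f x)).

Definition cube (Y : C) : C := prod (prod Y Y) Y.

Definition is_triple (Y Z : C) (u : Hom Z (cube Y)) (x y z : Hom Z Y) : Prop :=
  comp (prj1 Y Y) (comp (prj1 (prod Y Y) Y) u) = x /\
  comp (prj2 Y Y) (comp (prj1 (prod Y Y) Y) u) = y /\
  comp (prj2 (prod Y Y) Y) u = z.

Definition is_assoc_maltsev (Y : C) (p : Hom (cube Y) Y) : Prop :=
  (forall Z (x y : Hom Z Y) (u : Hom Z (cube Y)), is_triple u x y y -> comp p u = x) /\
  (forall Z (x y : Hom Z Y) (u : Hom Z (cube Y)), is_triple u y y x -> comp p u = x) /\
  (forall Z (x y z a b : Hom Z Y) (u v w t : Hom Z (cube Y)),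
      is_triple u z a b -> is_triple v x y (comp p u) ->
      is_triple w x y z -> is_triple t (comp p w) a b ->
      comp p v = comp p t).

End Defs.

(* Main.v *)
Require Import Defs.
Set Implicit Arguments.
Unset Strict Implicit.
From Stdlib Require Import Setoid.

Section Aux.
Variable C : FinCompleteCategory.

Lemma pb_pair_comp (X Y Z : C) (f : Hom X Z) (g : Hom Y Z) W (a : Hom W X) (b : Hom W Y)
  (H : comp f a = comp g b) W' (h : Hom W' W) (H' : comp f (comp a h) = comp g (comp b h)) :
  comp (pb_pair H) h = pb_pair H'.
Proof.
  apply pb_uniq.
  - rewrite comp_assoc, !pb_pair1. reflexivity.
  - rewrite comp_assoc, !pb_pair2. reflexivity.
Qed.

Lemma pb_pair_ext (X Y Z : C) (f : Hom X Z) (g : Hom Y Z) W (a a' : Hom W X) (b b' : Hom W Y)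
  (H : comp f a = comp g b) (H' : comp f a' = comp g b') :
  a = a' -> b = b' -> pb_pair H = pb_pair H'.
Proof.
  intros; subst. apply pb_uniq; rewrite ?pb_pair1, ?pb_pair2; reflexivity.
Qed.

Lemma pb_eta (X Y Z : C) (f : Hom X Z) (g : Hom Y Z) W (u : Hom W (pb f g))
  (H : comp f (comp (pb1 f g) u) = comp g (comp (pb2 f g) u)) : u = pb_pair H.
Proof. apply pb_uniq; rewrite ?pb_pair1, ?pb_pair2; reflexivity. Qed.

Lemma pair_comp (X Y Z : C) (a : Hom Z X) (b : Hom Z Y) W (h : Hom W Z) :
  comp (pair a b) h = pair (comp a h) (comp b h).
Proof. unfold pair. apply pb_pair_comp. Qed.

Lemma pair_ext (X Y Z : C) (a a' : Hom Z X) (b b' : Hom Z Y) :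
  a = a' -> b = b' -> pair a b = pair a' b'.
Proof. intros; subst; reflexivity. Qed.

Lemma pair_inj (X Y Z : C) (a a' : Hom Z X) (b b' : Hom Z Y) :
  pair a b = pair a' b' -> a = a' /\ b = b'.
Proof.
  intros E. unfold pair in E. split.
  - rewrite <- (pb_pair1 (to_term_uniq (comp (to_term X) a) (comp (to_term Y) b))).
    rewrite E. apply pb_pair1.
  - rewrite <- (pb_pair2 (to_term_uniq (comp (to_term X) a) (comp (to_term Y) b))).
    rewrite E. apply pb_pair2.
Qed.

Definition KP (P W : C) (h : Hom P W) : span P :=
  {| sp_ob := pb h h; sp1 := pb1 h h; sp2 := pb2 h h |}.

Lemma in_rel_KP (P W : C) (h : Hom P W) Z (u v : Hom Z P) :
  in_rel (KP h) u v <-> comp h u = comp h v.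
Proof.
  split.
  - intros [d [E1 E2]]. simpl in *. subst. rewrite !comp_assoc, pb_comm. reflexivity.
  - intros E. exists (pb_pair E). simpl. split; [apply pb_pair1 | apply pb_pair2].
Qed.

Lemma KP_equiv (P W : C) (h : Hom P W) : is_equivalence_relation (KP h).
Proof.
  split; [|split; [|split]].
  - intros Z a b E1 E2. apply pb_uniq; assumption.
  - intros Z x. apply in_rel_KP. reflexivity.
  - intros Z x y. rewrite !in_rel_KP. intros; symmetry; assumption.
  - intros Z x y z. rewrite !in_rel_KP. intros; etransitivity; eassumption.
Qed.

Lemma rel_le_in_rel (X : C) (R K : span X) Z (u v : Hom Z X) :
  rel_le R K -> in_rel R u v -> in_rel K u v.
Proof.
  intros [m [E1 E2]] [d [D1 D2]]. exists (comp m d).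
  rewrite !comp_assoc, E1, E2. auto.
Qed.

Lemma meet_in (X : C) (T R : span X) Z (u v : Hom Z X) :
  in_rel T u v -> in_rel R u v -> in_rel (rel_meet T R) u v.
Proof.
  intros [t [T1 T2]] [r [R1 R2]].
  assert (H : comp (pair (sp1 T) (sp2 T)) t = comp (pair (sp1 R) (sp2 R)) r).
  { rewrite !pair_comp, T1, T2, R1, R2. reflexivity. }
  exists (pb_pair H). simpl. rewrite <- !comp_assoc, pb_pair1. auto.
Qed.

Lemma meet_out (X : C) (T R : span X) Z (u v : Hom Z X) :
  in_rel (rel_meet T R) u v -> in_rel T u v /\ in_rel R u v.
Proof.
  intros [d [D1 D2]]. simpl in *.
  pose proof (pb_comm (pair (sp1 T) (sp2 T)) (pair (sp1 R) (sp2 R))) as E.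
  rewrite !pair_comp in E. apply pair_inj in E. destruct E as [E1 E2].
  split.
  - exists (comp (pb1 _ _) d). rewrite !comp_assoc. auto.
  - exists (comp (pb2 (pair (sp1 T) (sp2 T)) (pair (sp1 R) (sp2 R))) d).
    rewrite !comp_assoc, <- E1, <- E2. auto.
Qed.

Lemma rel_le_iff (X : C) (R K : span X) : rel_le R K <-> in_rel K (sp1 R) (sp2 R).
Proof. reflexivity. Qed.

Lemma meet_discrete (X : C) (T R : span X) :
  is_equivalence_relation T -> is_equivalence_relation R ->
  (forall Z (u v : Hom Z X), in_rel T u v -> in_rel R u v -> u = v) ->
  rel_eq (rel_meet T R) (discrete_rel X).
Proof.
  intros [_ [rT _]] [_ [rR _]] Hyp. split.
  - assert (E : sp1 (rel_meet T R) = sp2 (rel_meet T R)).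
    { destruct (@meet_out X T R _ (sp1 (rel_meet T R)) (sp2 (rel_meet T R))) as [A B].
      { exists (idm _). rewrite !comp_idr. auto. }
      apply Hyp; assumption. }
    exists (sp1 (rel_meet T R)). simpl. rewrite !comp_idl. split; [reflexivity|].
    exact E.
  - apply rel_le_iff. simpl. apply meet_in; auto.
Qed.

Lemma discrete_out (X : C) (M : span X) Z (u v : Hom Z X) :
  rel_le M (discrete_rel X) -> in_rel M u v -> u = v.
Proof.
  intros L I. destruct (rel_le_in_rel L I) as [d [D1 D2]]. simpl in *.
  rewrite comp_idl in D1, D2. congruence.
Qed.

End Aux.

Section Abs.
Variable C : FinCompleteCategory.

Lemma abstract_mono (wcd : weakly_congruence_distributive C) (A X : C) (g : Hom A X)
  (T : span (pb g g)) :
  is_equivalence_relation T ->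
  (forall Z (u v : Hom Z (pb g g)), in_rel T u v ->
      comp (pb1 g g) u = comp (pb1 g g) v -> u = v) ->
  (forall Z (u v : Hom Z (pb g g)), in_rel T u v ->
      comp (pb2 g g) u = comp (pb2 g g) v -> u = v) ->
  (forall Z (u v : Hom Z (pb g g)), comp (pb1 g g) u = comp (pb2 g g) u ->
      comp (pb1 g g) v = comp (pb2 g g) v ->
      comp g (comp (pb1 g g) u) = comp g (comp (pb1 g g) v) -> in_rel T u v) ->
  is_mono g.
Proof.
  intros eT H1 H2 H3.
  set (R := KP (pb1 g g)). set (S := KP (pb2 g g)). set (J := KP (comp g (pb1 g g))).
  assert (sup : is_equiv_sup R S J).
  { split; [apply KP_equiv|split; [|split]].
    - apply rel_le_iff. apply in_rel_KP. simpl.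
      rewrite <- !comp_assoc, pb_comm. reflexivity.
    - apply rel_le_iff. apply in_rel_KP. simpl.
      rewrite <- !comp_assoc, (comp_assoc g (pb1 g g)), pb_comm, <- comp_assoc,
        (pb_comm (pb2 g g) (pb2 g g)), comp_assoc, <- pb_comm, comp_assoc. reflexivity.
    - intros K eK RK SK. apply rel_le_iff.
      set (u := sp1 J). set (v := sp2 J).
      assert (Huv : comp g (comp (pb1 g g) u) = comp g (comp (pb2 g g) v)).
      { subst u v; simpl.
        pose proof (pb_comm (comp g (pb1 g g)) (comp g (pb1 g g))) as EJ.
        pose proof (pb_comm g g) as EP.
        set (q1 := pb1 (comp g (pb1 g g)) (comp g (pb1 g g))) in *.
        set (q2 := pb2 (comp g (pb1 g g)) (comp g (pb1 g g))) in *.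
        rewrite comp_assoc, EJ, (comp_assoc g (pb2 g g)).
        exact (f_equal (fun h => comp h q2) EP). }
      set (w := pb_pair Huv).
      destruct eK as [_ [_ [_ tK]]]. apply tK with w.
      + apply (rel_le_in_rel RK). apply in_rel_KP. subst w. simpl. rewrite pb_pair1. reflexivity.
      + apply (rel_le_in_rel SK). apply in_rel_KP. subst w. simpl. rewrite pb_pair2. reflexivity. }
  assert (eR : is_equivalence_relation R) by apply KP_equiv.
  assert (eS : is_equivalence_relation S) by apply KP_equiv.
  assert (mR : rel_eq (rel_meet T R) (discrete_rel _)).
  { apply meet_discrete; auto. intros Z u v I IR. apply H1; auto. apply in_rel_KP in IR. exact IR. }
  assert (mS : rel_eq (rel_meet T S) (discrete_rel _)).
  { apply meet_discrete; auto. intros Z u v I IR. apply H2; auto. apply in_rel_KP in IR. exact IR. }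
  destruct (wcd _ R S T J eR eS eT sup mR mS) as [LJ _].
  intros Z x y Hxy.
  set (dx := @pb_pair C _ _ _ g g _ x x eq_refl).
  set (dy := @pb_pair C _ _ _ g g _ y y eq_refl).
  assert (E : dx = dy).
  { apply (discrete_out LJ). apply meet_in.
    - apply H3; subst dx dy; rewrite ?pb_pair1, ?pb_pair2; auto.
    - apply in_rel_KP. subst dx dy. rewrite <- !comp_assoc, !pb_pair1. exact Hxy. }
  rewrite <- (pb_pair1 (g := g) (eq_refl (comp g x))), <- (pb_pair1 (g := g) (eq_refl (comp g y))).
  fold dx dy. rewrite E. reflexivity.
Qed.
End Abs.

Section Grp.
Variable C : FinCompleteCategory.
Variables (X A : C) (f : Hom A X) (s : Hom X A) (m : Hom (pb f f) A) (i : Hom A A).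
Hypothesis G : is_internal_group_in_Pt s m i.

Definition mul Z (x y : Hom Z A) (H : comp f x = comp f y) : Hom Z A := comp m (pb_pair H).
Definition e Z (x : Hom Z A) : Hom Z A := comp s (comp f x).

Lemma mul_ext Z (x x' y y' : Hom Z A) H H' : x = x' -> y = y' -> @mul Z x y H = @mul Z x' y' H'.
Proof. intros. unfold mul. f_equal. apply pb_pair_ext; auto. Qed.

Lemma f_mul Z (x y : Hom Z A) H : comp f (@mul Z x y H) = comp f x.
Proof.
  destruct G as [_ [Gm _]]. unfold mul. rewrite comp_assoc, Gm, <- comp_assoc, pb_pair1. reflexivity.
Qed.

Lemma f_i Z (x : Hom Z A) : comp f (comp i x) = comp f x.
Proof. destruct G as [_ [_ [_ [Gi _]]]]. rewrite comp_assoc, Gi. reflexivity. Qed.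

Lemma f_e Z (x : Hom Z A) : comp f (e x) = comp f x.
Proof. destruct G as [Gs _]. unfold e. rewrite comp_assoc, Gs, comp_idl. reflexivity. Qed.

Lemma e_eq Z (x y : Hom Z A) : comp f x = comp f y -> e x = e y.
Proof. unfold e. intros ->. reflexivity. Qed.

Lemma mul_assoc Z (x y z : Hom Z A) H1 H2 H3 H4 :
  @mul Z (@mul Z x y H1) z H2 = @mul Z x (@mul Z y z H3) H4.
Proof.
  destruct G as [_ [_ [_ [_ [_ [Ga _]]]]]]. unfold mul.
  apply (Ga Z x y z (pb_pair H1) (pb_pair H2) (pb_pair H3) (pb_pair H4)); split; rewrite ?pb_pair1, ?pb_pair2; reflexivity.
Qed.

Lemma mul_e_r Z (x : Hom Z A) H : @mul Z x (e x) H = x.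
Proof.
  destruct G as [_ [_ [_ [_ [_ [_ [Gu _]]]]]]]. unfold mul.
  apply Gu. split; rewrite ?pb_pair1, ?pb_pair2; reflexivity.
Qed.

Lemma mul_e_l Z (x : Hom Z A) H : @mul Z (e x) x H = x.
Proof.
  destruct G as [_ [_ [_ [_ [_ [_ [_ [Gu _]]]]]]]]. unfold mul.
  apply Gu. split; rewrite ?pb_pair1, ?pb_pair2; reflexivity.
Qed.

Lemma mul_inv_r Z (x : Hom Z A) H : @mul Z x (comp i x) H = e x.
Proof.
  destruct G as [_ [_ [_ [_ [_ [_ [_ [_ [Gv _]]]]]]]]]. unfold mul.
  apply Gv. split; rewrite ?pb_pair1, ?pb_pair2; reflexivity.
Qed.

Lemma mul_inv_l Z (x : Hom Z A) H : @mul Z (comp i x) x H = e x.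
Proof.
  destruct G as [_ [_ [_ [_ [_ [_ [_ [_ [_ Gv]]]]]]]]]. unfold mul.
  apply Gv. split; rewrite ?pb_pair1, ?pb_pair2; reflexivity.
Qed.

Lemma cancel_l Z (a x y : Hom Z A) (Hx : comp f a = comp f x) (Hy : comp f a = comp f y) :
  @mul Z a x Hx = @mul Z a y Hy -> x = y.
Proof.
  intros E.
  assert (K : forall w (Hw : comp f a = comp f w),
             w = @mul Z (comp i a) (@mul Z a w Hw) (eq_trans (f_i a) (eq_sym (f_mul Hw)))).
  { intros w Hw.
    assert (H1 : comp f (comp i a) = comp f a) by apply f_i.
    rewrite <- (@mul_assoc Z (comp i a) a w H1 (eq_trans (f_mul H1) (eq_trans H1 Hw))).
    transitivity (@mul Z (e w) w (f_e w)).
    - symmetry; apply mul_e_l.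
    - apply mul_ext; [|reflexivity]. rewrite mul_inv_l. apply e_eq. auto. }
  rewrite (K x Hx), (K y Hy). apply mul_ext; auto.
Qed.

Lemma cancel_r Z (a x y : Hom Z A) (Hx : comp f x = comp f a) (Hy : comp f y = comp f a) :
  @mul Z x a Hx = @mul Z y a Hy -> x = y.
Proof.
  intros E.
  assert (K : forall w (Hw : comp f w = comp f a),
             w = @mul Z (@mul Z w a Hw) (comp i a) (eq_trans (f_mul Hw) (eq_trans Hw (eq_sym (f_i a))))).
  { intros w Hw.
    assert (H1 : comp f a = comp f (comp i a)) by (symmetry; apply f_i).
    rewrite (@mul_assoc Z w a (comp i a) Hw _ H1 (eq_trans Hw (eq_sym (f_mul H1)))).
    transitivity (@mul Z w (e w) (eq_sym (f_e w))).
    - symmetry; apply mul_e_r.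
    - apply mul_ext; [reflexivity|]. rewrite mul_inv_r. apply e_eq. auto. }
  rewrite (K x Hx), (K y Hy). apply mul_ext; auto.
Qed.

End Grp.

Section GrpMain.
Variable C : FinCompleteCategory.

Lemma group_iso (wcd : weakly_congruence_distributive C) (X A : C) (f : Hom A X) (s : Hom X A)
  (m : Hom (pb f f) A) (i : Hom A A) : is_internal_group_in_Pt s m i -> is_iso f.
Proof.
  intros G.
  assert (Hd : comp f (pb1 f f) = comp f (comp i (pb2 f f))).
  { rewrite (f_i G). apply pb_comm. }
  set (d := comp m (pb_pair Hd)).
  assert (dc : forall Z (u : Hom Z (pb f f)) H,
             comp d u = mul m (x:=comp (pb1 f f) u) (y:=comp i (comp (pb2 f f) u)) H).
  { intros Z u H. unfold d, mul. rewrite <- comp_assoc. f_equal.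
    apply pb_uniq; rewrite comp_assoc, ?pb_pair1, ?pb_pair2; [reflexivity|].
    rewrite <- comp_assoc. reflexivity. }
  assert (fib : forall Z (u : Hom Z (pb f f)), comp f (comp (pb1 f f) u) = comp f (comp (pb2 f f) u)).
  { intros. rewrite !comp_assoc, pb_comm. reflexivity. }
  assert (Mf : is_mono f).
  { apply (@abstract_mono C wcd A X f (KP d)).
    - apply KP_equiv.
    - intros Z u v I E1. apply in_rel_KP in I.
      assert (Hu : comp f (comp (pb1 f f) u) = comp f (comp i (comp (pb2 f f) u)))
        by (rewrite (f_i G); apply fib).
      assert (Hv : comp f (comp (pb1 f f) u) = comp f (comp i (comp (pb2 f f) v)))
        by (rewrite (f_i G), E1; apply fib).
      rewrite (dc _ _ Hu) in I.
      assert (Hv' : comp f (comp (pb1 f f) v) = comp f (comp i (comp (pb2 f f) v)))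
        by (rewrite (f_i G); apply fib).
      rewrite (dc _ _ Hv') in I.
      assert (I2 : mul m Hu = mul m Hv).
      { rewrite I. apply (mul_ext m); auto. }
      apply (cancel_l G) in I2.
      assert (E2 : comp (pb2 f f) u = comp (pb2 f f) v).
      { assert (J1 : comp f (comp (pb2 f f) u) = comp f (comp i (comp (pb2 f f) u)))
          by (rewrite (f_i G); reflexivity).
        assert (J2 : comp f (comp (pb2 f f) v) = comp f (comp i (comp (pb2 f f) u)))
          by (rewrite (f_i G), <- !fib, E1; reflexivity).
        apply (cancel_r G (Hx := J1) (Hy := J2)).
        rewrite (mul_inv_r G).
        assert (J3 : comp f (comp (pb2 f f) v) = comp f (comp i (comp (pb2 f f) v)))
          by (rewrite (f_i G); reflexivity).
        transitivity (mul m J3). 2:{ apply (mul_ext m); auto. }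
        rewrite (mul_inv_r G).
        apply (e_eq s). rewrite <- !fib. rewrite E1. reflexivity. }
      apply pb_uniq; auto.
    - intros Z u v I E2. apply in_rel_KP in I.
      assert (Hu : comp f (comp (pb1 f f) u) = comp f (comp i (comp (pb2 f f) u)))
        by (rewrite (f_i G); apply fib).
      assert (Hv : comp f (comp (pb1 f f) v) = comp f (comp i (comp (pb2 f f) u)))
        by (rewrite (f_i G), E2; apply fib).
      rewrite (dc _ _ Hu) in I.
      assert (Hv' : comp f (comp (pb1 f f) v) = comp f (comp i (comp (pb2 f f) v)))
        by (rewrite (f_i G); apply fib).
      rewrite (dc _ _ Hv') in I.
      assert (I2 : mul m Hu = mul m Hv).
      { rewrite I. apply (mul_ext m); auto. rewrite E2; reflexivity. }
      apply (cancel_r G) in I2.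
      apply pb_uniq; auto.
    - intros Z u v Eu Ev Euv. apply in_rel_KP.
      assert (Hu : comp f (comp (pb1 f f) u) = comp f (comp i (comp (pb2 f f) u)))
        by (rewrite (f_i G); apply fib).
      assert (Hv : comp f (comp (pb1 f f) v) = comp f (comp i (comp (pb2 f f) v)))
        by (rewrite (f_i G); apply fib).
      rewrite (dc _ _ Hu), (dc _ _ Hv).
      assert (Hu' : comp f (comp (pb1 f f) u) = comp f (comp i (comp (pb1 f f) u)))
        by (rewrite (f_i G); reflexivity).
      assert (Hv2 : comp f (comp (pb1 f f) v) = comp f (comp i (comp (pb1 f f) v)))
        by (rewrite (f_i G); reflexivity).
      transitivity (mul m Hu'). { apply (mul_ext m); auto. rewrite Eu; reflexivity. }
      transitivity (mul m Hv2). 2:{ apply (mul_ext m); auto. rewrite Ev; reflexivity. }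
      rewrite !(mul_inv_r G). apply (e_eq s). exact Euv. }
  destruct G as [Gs _].
  exists s. split; [exact Gs|].
  apply Mf. rewrite comp_assoc, Gs, comp_idl, comp_idr. reflexivity.
Qed.
End GrpMain.

Section Mal.
Variable C : FinCompleteCategory.

Lemma prj1_pair (X Y Z : C) (a : Hom Z X) (b : Hom Z Y) : comp (prj1 X Y) (pair a b) = a.
Proof. unfold prj1, pair. apply pb_pair1. Qed.
Lemma prj2_pair (X Y Z : C) (a : Hom Z X) (b : Hom Z Y) : comp (prj2 X Y) (pair a b) = b.
Proof. unfold prj2, pair. apply pb_pair2. Qed.
Lemma pair_eta (X Y Z : C) (w : Hom Z (prod X Y)) : w = pair (comp (prj1 X Y) w) (comp (prj2 X Y) w).
Proof. apply pb_uniq; unfold pair; rewrite ?pb_pair1, ?pb_pair2; reflexivity. Qed.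
Lemma pair_uniq (X Y Z : C) (w w' : Hom Z (prod X Y)) :
  comp (prj1 X Y) w = comp (prj1 X Y) w' -> comp (prj2 X Y) w = comp (prj2 X Y) w' -> w = w'.
Proof. intros; apply pb_uniq; auto. Qed.

Variables (Y : C) (p : Hom (cube Y) Y).
Hypothesis M : is_assoc_maltsev p.

Definition triple Z (x y z : Hom Z Y) : Hom Z (cube Y) := pair (pair x y) z.
Definition P3 Z (x y z : Hom Z Y) : Hom Z Y := comp p (triple x y z).

Lemma triple_ok Z (x y z : Hom Z Y) : is_triple (triple x y z) x y z.
Proof. unfold is_triple, triple, cube. rewrite !prj1_pair, !prj2_pair. auto. Qed.

Lemma ax1 Z (x y : Hom Z Y) : P3 x y y = x.
Proof. destruct M as [A1 _]. apply (A1 Z x y). apply triple_ok. Qed.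
Lemma ax2 Z (x y : Hom Z Y) : P3 y y x = x.
Proof. destruct M as [_ [A2 _]]. apply (A2 Z x y). apply triple_ok. Qed.
Lemma ax3 Z (x y z a b : Hom Z Y) : P3 x y (P3 z a b) = P3 (P3 x y z) a b.
Proof.
  destruct M as [_ [_ A3]]. unfold P3 at 1 3.
  apply (A3 Z x y z a b (triple z a b) (triple x y (P3 z a b)) (triple x y z) (triple (P3 x y z) a b)); apply triple_ok.
Qed.

Definition TM : span (pb (to_term Y) (to_term Y)) :=
  {| sp_ob := cube Y; sp1 := prj1 (prod Y Y) Y; sp2 := pair p (prj2 (prod Y Y) Y) |}.

Definition q1 Z (u : Hom Z (prod Y Y)) := comp (prj1 Y Y) u.
Definition q2 Z (u : Hom Z (prod Y Y)) := comp (prj2 Y Y) u.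

Lemma inT Z (u v : Hom Z (prod Y Y)) :
  in_rel TM u v <-> P3 (q1 u) (q2 u) (q2 v) = q1 v.
Proof.
  split.
  - intros [d [D1 D2]]. simpl in *. unfold cube in *.
    assert (Ed : d = triple (q1 u) (q2 u) (q2 v)).
    { subst u v. unfold triple, q1, q2.
      apply pair_uniq.
      - rewrite prj1_pair. apply pair_uniq; rewrite ?prj1_pair, ?prj2_pair; reflexivity.
      - rewrite prj2_pair, comp_assoc. change (pb (to_term Y) (to_term Y)) with (prod Y Y). rewrite prj2_pair. reflexivity. }
    unfold P3. rewrite <- Ed. subst v. unfold q1. change (pb (to_term Y) (to_term Y)) with (prod Y Y) in *; unfold cube in *. rewrite pair_comp, prj1_pair. reflexivity.
  - intros E. exists (triple (q1 u) (q2 u) (q2 v)). simpl. change (pb (to_term Y) (to_term Y)) with (prod Y Y) in *; unfold cube in *. split.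
    + unfold triple. rewrite prj1_pair. symmetry. apply pair_eta.
    + rewrite pair_comp. transitivity (pair (q1 v) (q2 v)).
      * apply pair_ext; [exact E|]. unfold triple. rewrite prj2_pair. reflexivity.
      * symmetry; apply pair_eta.
Qed.

Lemma TM_equiv : is_equivalence_relation TM.
Proof.
  split; [|split; [|split]].
  - intros Z a b E1 E2. simpl in *. apply pair_uniq; [exact E1|].
    pose proof (f_equal (comp (prj2 Y Y)) E2) as E3. change (pb (to_term Y) (to_term Y)) with (prod Y Y) in *; unfold cube in *; rewrite !comp_assoc, prj2_pair in E3. exact E3.
  - intros Z x. apply inT. apply ax1.
  - intros Z x y. rewrite !inT. intros E. rewrite <- E, <- ax3, ax2, ax1. reflexivity.
  - intros Z x y z. rewrite !inT. intros E1 E2. rewrite <- E2, <- E1, <- ax3, ax2. reflexivity.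
Qed.

End Mal.

Section MalMain.
Variable C : FinCompleteCategory.

Lemma maltsev_mono (wcd : weakly_congruence_distributive C) (Y : C) (p : Hom (cube Y) Y) :
  is_assoc_maltsev p -> is_mono (to_term Y).
Proof.
  intros M.
  apply (@abstract_mono C wcd Y term (to_term Y) (TM p)).
  - apply (TM_equiv M).
  - intros Z u v I E1. apply inT in I.
    change (q1 u = q1 v) in E1.
    apply pair_uniq; [exact E1|]. change (q2 u = q2 v).
    set (a := q1 u) in *. set (b := q2 u) in *. set (d := q2 v) in *. set (c := q1 v) in *.
    rewrite <- E1 in I.
    transitivity (P3 p b a (P3 p a b d)).
    + rewrite I, (ax1 M). reflexivity.
    + rewrite (ax3 M), (ax1 M), (ax2 M). reflexivity.
  - intros Z u v I E2. apply inT in I.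
    change (q2 u = q2 v) in E2.
    apply pair_uniq; [|exact E2]. change (q1 u = q1 v).
    rewrite <- I, E2, (ax1 M). reflexivity.
  - intros Z u v Eu Ev _. apply inT.
    change (q1 u = q2 u) in Eu. change (q1 v = q2 v) in Ev.
    rewrite <- Eu, <- Ev, (ax2 M). reflexivity.
Qed.
End MalMain.

Theorem mainTheorem11 (C : FinCompleteCategory) :
  weakly_congruence_distributive C ->
  (forall (X A : C) (f : Hom A X) (s : Hom X A) (m : Hom (pb f f) A) (i : Hom A A),
      is_internal_group_in_Pt s m i -> is_iso f) /\
  (forall (Y : C) (p : Hom (cube Y) Y),
      is_assoc_maltsev p -> is_mono (to_term Y)).
Proof.
  intros wcd. split.
  - intros X A f s m i G. exact (group_iso wcd G).
  - intros Y p M. exact (maltsev_mono wcd M).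
Qed.
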